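(* For every $n\in\mathbb N$, the $n$-fold iterated group extension $\mathbb L_0\Delta_n$ (a quaternionic structure of order $n$ with $-1=1$) satisfies $\dim_{\mathbb F_2}B(\mathbb L_0\Delta_n)=\binom n2$, and the $(n-1)$-fold iterated group extension $\mathbb L_1\Delta_{n-1}$ (of order $n$, with $-1\ne1$) satisfies $\dim_{\mathbb F_2}B(\mathbb L_1\Delta_{n-1})=\binom n2+1$.
   Context: A quaternionic structure is a triple $S=(G,-1,q)$ where $G$ is a multiplicative group in which every element is its own inverse, $-1\in G$ is distinguished (possibly $-1=1$), $-a:=(-1)a$, and $q:G\times G\to Q$ is surjective onto a set $Q$ with distinguished $0$, satisfying for all $a,b,c,d$: (Q1) $q(a,-a)=0$; (Q2) $q(a,b)=q(b,a)$; (Q3) $q(a,b)=q(a,c)\iff q(a,bc)=0$; (Q4) $q(a,b)=q(c,d)\iff\exists x$: $q(a,b)=q(a,x)=q(c,x)=q(c,d)$. The order is $\dim_{\mathbb F_2}G$. The abstract 2-Brauer group $B(S)$ is the abelian group (operation $\ast$) generated by $Q$ subject only to $q(a,b)\ast q(a,c)=q(a,bc)$ for all $a,b,c\in G$. $\mathbb L_0$: $G=\{1\}$, $Q=\{0\}$. $\mathbb L_1$: $G=\{1,a\}$, $-1=a$, $Q=\{0,1\}$, $q(a,a)=1$, $q=0$ otherwise. Group extension $S\Delta=S[x]=(G\times\{1,x\},-1,q_x)$ with $\{1,x\}$ cyclic of order $2$ and $q_x(ax^\alpha,bx^\beta)=(q(a,b),(-1)^{\alpha\beta}a^\beta b^\alpha)\in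 Q\times G$, zero quaternion $(0,1)$; $S\Delta_k$ denotes the $k$-fold iterated group extension ($S\Delta_0=S$). *)

(* Defs.v *)
From HB Require Import structures.
From mathcomp Require Import all_boot all_order all_algebra.
Set Implicit Arguments. Unset Strict Implicit. Unset Printing Implicit Defensive.
Import GRing.Theory.
Local Open Scope ring_scope.

(* The group G (every element is its own inverse) is represented additively
   as F_2^k = 'rV['F_2]_k (group product = vector sum, 1 = 0).
   m1 is the distinguished element -1, and qv is the quaternion map; its
   values are encoded in the type seq (seq 'F_2), and the quaternion set Q
   is the image of qv (so qv is surjective onto Q by construction). *)
Record qstr (k : nat) := QStr {
  m1 : 'rV['F_2]_k;
  qv : 'rV['F_2]_k -> 'rV['F_2]_k -> seq (seq 'F_2) }.

Definition rowseq k (v : 'rV['F_2]_k) : seq 'F_2 := [seq v ord0 i | i <- enum 'I_k].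

(* G x {1,x} = F_2^(k+1): the last coordinate is the exponent of x. *)
Definition lowrow k (u : 'rV['F_2]_k.+1) : 'rV['F_2]_k :=
  \row_(j < k) u ord0 (lift ord_max j).
Definition extrow k (v : 'rV['F_2]_k) : 'rV['F_2]_k.+1 :=
  \row_(i < k.+1) match unlift ord_max i with Some j => v ord0 j | None => 0 end.

(* Group extension S[x]:
   q_x(a x^al, b x^be) = (q(a,b), (-1)^(al be) a^be b^al),
   the pair (Q value, G value) being encoded by rcons. *)
Definition ext k (S : qstr k) : qstr k.+1 :=
  QStr (extrow (m1 S))
    (fun u v =>
       let a := lowrow u in let al := u ord0 ord_max in
       let b := lowrow v in let be := v ord0 ord_max in
       rcons (qv S a b) (rowseq ((al * be) *: m1 S + be *: a + al *: b))).

Fixpoint iterExt k0 (S : qstr k0) (n : nat) : qstr (n + k0) :=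
  match n with
  | 0 => S
  | n'.+1 => ext (iterExt S n')
  end.

Definition L0 : qstr 0 := QStr 0 (fun _ _ => [::]).
(* L_1 : G = {1,a}, -1 = a, q(a,a) = 1, q = 0 otherwise. *)
Definition L1 : qstr 1 :=
  QStr (const_mx 1) (fun u v => [:: [:: u ord0 ord0 * v ord0 ord0]]).

Definition L0Delta n := iterExt L0 n.
Definition L1Delta n := iterExt L1 n.

Definition Qset k (S : qstr k) : seq (seq (seq 'F_2)) :=
  undup [seq qv S a b | a <- enum 'rV['F_2]_k, b <- enum 'rV['F_2]_k].

Definition gen k (S : qstr k) (x : seq (seq 'F_2)) : 'rV['F_2]_(size (Qset S)) :=
  \row_(i < size (Qset S)) (nth [::] (Qset S) i == x)%:R.

(* defining relation q(a,b) * q(a,c) = q(a,bc) *)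
Definition relvec k (S : qstr k) (a b c : 'rV['F_2]_k) : 'rV['F_2]_(size (Qset S)) :=
  gen S (qv S a b) + gen S (qv S a c) - gen S (qv S a (b + c)).

Definition relspace k (S : qstr k) :=
  \big[addsmx/(0 : 'M['F_2]_(size (Qset S)))]_(t : 'rV['F_2]_k * 'rV['F_2]_k * 'rV['F_2]_k)
      (genmx (relvec S t.1.1 t.1.2 t.2)).

(* dim_{F_2} B(S): B(S) = Z^(Q)/<relations> is killed by 2, so it equals
   B(S)/2B(S) = F_2^(Q)/<relations mod 2>, whose dimension is |Q| - rank. *)
Definition dimB k (S : qstr k) : nat := (size (Qset S) - \rank (relspace S))%N.

(* Main.v *)
Require Import Defs.
From mathcomp Require Import all_boot all_order all_algebra.
From mathcomp Require Import zify ring.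
Set Implicit Arguments. Unset Strict Implicit. Unset Printing Implicit Defensive.
Import GRing.Theory.
Local Open Scope ring_scope.

Lemma F2_cases (x : 'F_2) : x = 0 \/ x = 1.
Proof.
have : (val x < 2)%N := ltn_ord x.
case: x => -[|[|//]] /= h _; [left|right]; exact/val_inj.
Qed.

Lemma F2_add_self (x : 'F_2) : x + x = 0.
Proof. by case: (F2_cases x) => ->; [rewrite addr0 | apply/val_inj]. Qed.

Lemma F2_mul_self (x : 'F_2) : x * x = x.
Proof. by case: (F2_cases x) => ->; rewrite ?mulr0 ?mulr1. Qed.

Lemma row_closure k (Q : 'rV['F_2]_k -> Prop) :
  Q 0 -> (forall u v, Q u -> Q v -> Q (u + v)) ->
  (forall j, Q (delta_mx 0 j)) -> forall u, Q u.
Proof.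
move=> Q0 QD Qe u; rewrite (row_sum_delta u).
elim/big_ind: _ => // j _.
by case: (F2_cases (u 0 j)) => ->; rewrite ?scale0r ?scale1r.
Qed.

Section Frame.
Variables (k : nat) (S : qstr k).
Local Notation N := (size (Qset S)).
Local Notation cls a b := (gen S (qv S a b)).

Lemma qv_in a b : qv S a b \in Qset S.
Proof. by rewrite mem_undup; apply: allpairs_f; rewrite mem_enum. Qed.

Lemma Qset_mem x : x \in Qset S -> exists a b, x = qv S a b.
Proof. by rewrite mem_undup => /allpairsP [[a b] [_ _ ->]]; exists a, b. Qed.

Lemma gen_nth (r : 'I_N) : gen S (nth [::] (Qset S) r) = delta_mx 0 r.
Proof.
apply/rowP => i; rewrite !mxE nth_uniq ?undup_uniq //.
Qed.

Lemma gen_qv a b : exists r : 'I_N, gen S (qv S a b) = delta_mx 0 r /\ nth [::] (Qset S) r = qv S a b.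
Proof.
have hi : (index (qv S a b) (Qset S) < N)%N by rewrite index_mem qv_in.
exists (Ordinal hi); rewrite -gen_nth /= nth_index ?qv_in //.
Qed.

Lemma relvec_sub a b c : (relvec S a b c <= relspace S)%MS.
Proof.
rewrite /relspace; apply: (sumsmx_sup (a, b, c)) => //.
by rewrite genmxE.
Qed.

Lemma cls_0 a : cls a 0 = relvec S a 0 0.
Proof. by rewrite /relvec addr0 addrK. Qed.

Lemma cls_D a b c : cls a (b + c) = cls a b + cls a c - relvec S a b c.
Proof. by rewrite /relvec opprB [RHS]addrC subrK. Qed.


Lemma oppmx_sub m1 m2 n (A : 'M['F_2]_(m1, n)) (B : 'M_(m2, n)) :
  (A <= B)%MS -> (- A <= B)%MS.
Proof. by move=> h; rewrite -scaleN1r scalemx_sub. Qed.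

Lemma frame_upper (P : {pred 'I_k * 'I_k})
  (sym : forall a b, qv S a b = qv S b a)
  (base : forall i j, (exists x, qv S (delta_mx 0 i) (delta_mx 0 j) = qv S x 0) \/
          exists2 p, p \in P & qv S (delta_mx 0 i) (delta_mx 0 j) = qv S (delta_mx 0 p.1) (delta_mx 0 p.2)) :
  (N <= \rank (relspace S) + #|P|)%N.
Proof.
pose D := (\sum_(p | p \in P) <<cls (delta_mx 0 p.1) (delta_mx 0 p.2)>>)%MS.
pose T := (relspace S + D)%MS.
have RT v : (v <= relspace S)%MS -> (v <= T)%MS.
  by move=> h; apply: submx_trans h (addsmxSl _ _).
have relT a b c : (relvec S a b c <= T)%MS by apply: RT; apply: relvec_sub.
have c0 a : (cls a 0 <= T)%MS by rewrite cls_0.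
have cD a b c : (cls a b <= T)%MS -> (cls a c <= T)%MS -> (cls a (b + c) <= T)%MS.
  by move=> h1 h2; rewrite cls_D; apply: addmx_sub; [apply: addmx_sub|apply: oppmx_sub].
have cb i j : (cls (delta_mx 0 i) (delta_mx 0 j) <= T)%MS.
  case: (base i j) => [[x ->]|[p pP ->]] //.
  apply: submx_trans (addsmxSr _ _).
  by apply: (sumsmx_sup p) => //; rewrite genmxE.
have cE i b : (cls (delta_mx 0 i) b <= T)%MS.
  move: b; apply: (@row_closure _ (fun b => cls (delta_mx 0 i) b <= T)%MS) => // u v.
  exact: cD.
have call a b : (cls a b <= T)%MS.
  move: a b; apply: (@row_closure _ (fun a => forall b, cls a b <= T)%MS).
  - by move=> b; rewrite sym.
  - by move=> u v hu hv b; rewrite sym; apply: cD; rewrite sym.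
  - exact: cE.
have full : (1%:M <= T)%MS.
  apply/row_subP => r; rewrite row1 -gen_nth.
  have /Qset_mem [a [b ->]] : nth [::] (Qset S) r \in Qset S by rewrite mem_nth.
  exact: call.
have rD : (\rank D <= #|P|)%N.
  rewrite /D -sum1_card.
  elim/big_ind2: _ => [|A1 m1 A2 m2 h1 h2|p _]; first by rewrite mxrank0.
    apply: leq_trans (mxrank_adds_leqif A1 A2).1 _; exact: leq_add.
  by rewrite genmxE rank_leq_row.
have := mxrankS full; rewrite mxrank1 => h1; apply: leq_trans h1 _.
apply: leq_trans (mxrank_adds_leqif _ _).1 _.
by rewrite leq_add2l.
Qed.

Lemma frame_lower (P : {pred 'I_k * 'I_k})
  (crd : 'I_k * 'I_k -> seq (seq 'F_2) -> 'F_2)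
  (lin : forall p a b c, p \in P -> crd p (qv S a (b + c)) = crd p (qv S a b) + crd p (qv S a c))
  (spn : forall p q, p \in P -> q \in P ->
     crd q (qv S (delta_mx 0 p.1) (delta_mx 0 p.2)) = (p == q)%:R) :
  (#|P| <= N - \rank (relspace S))%N.
Proof.
pose phi x := \row_(c < #|P|) crd (enum_val c) x.
pose M := \matrix_(r < N, c < #|P|) crd (enum_val c) (nth [::] (Qset S) r).
have gM a b : gen S (qv S a b) *m M = phi (qv S a b).
  have [r [-> <-]] := gen_qv a b.
  by rewrite -rowE; apply/rowP => c; rewrite !mxE.
have RM : (relspace S <= kermx M)%MS.
  apply/sumsmx_subP => t _; rewrite genmxE; apply/sub_kermxP.
  rewrite /relvec mulmxBl mulmxDl !gM; apply/rowP => c; rewrite !mxE.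
  by rewrite lin ?enum_valP // subrr.
have fM : (1%:M <= M)%MS.
  apply/row_subP => c; rewrite row1.
  set p := enum_val c.
  have -> : delta_mx 0 c = phi (qv S (delta_mx 0 p.1) (delta_mx 0 p.2)).
    apply/rowP => c'; rewrite !mxE spn ?enum_valP //.
    by rewrite (inj_eq enum_val_inj) eq_sym.
  by rewrite -gM submxMl.
have rM : \rank M = #|P|.
  by apply/eqP; rewrite eqn_leq rank_leq_col -{1}(@mxrank1 'F_2 #|P|) mxrankS.
have := mxrankS RM; rewrite mxrank_ker rM => h.
have := rank_leq_row M; rewrite rM => h2.
lia.
Qed.

End Frame.

Definition co k (a : 'rV['F_2]_k) (i : nat) : 'F_2 := nth 0 (rowseq a) i.

Lemma size_rowseq k (a : 'rV['F_2]_k) : size (rowseq a) = k.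
Proof. by rewrite size_map size_enum_ord. Qed.

Lemma co_ord k (a : 'rV['F_2]_k) (i : 'I_k) : co a i = a 0 i.
Proof.
rewrite /co /rowseq (nth_map i) ?size_enum_ord // nth_ord_enum.
by congr (a _ _); apply/val_inj.
Qed.

Lemma co_ge k (a : 'rV['F_2]_k) i : (k <= i)%N -> co a i = 0.
Proof. by move=> h; rewrite /co nth_default // size_rowseq. Qed.

Lemma co_add k (a b : 'rV['F_2]_k) i : co (a + b) i = co a i + co b i.
Proof.
case: (ltnP i k) => h; last by rewrite !co_ge ?addr0.
by rewrite -[i]/(val (Ordinal h)) !co_ord mxE.
Qed.

Lemma co_scale k c (a : 'rV['F_2]_k) i : co (c *: a) i = c * co a i.
Proof.
case: (ltnP i k) => h; last by rewrite !co_ge ?mulr0.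
by rewrite -[i]/(val (Ordinal h)) !co_ord mxE.
Qed.

Lemma co_inj k (a b : 'rV['F_2]_k) : (forall i, (i < k)%N -> co a i = co b i) -> a = b.
Proof. by move=> h; apply/rowP => j; rewrite -!co_ord h. Qed.

Lemma co_low k (u : 'rV['F_2]_k.+1) i : (i < k)%N -> co (lowrow u) i = co u i.
Proof.
move=> h; rewrite -[i]/(val (Ordinal h)) co_ord mxE.
have h' : (i < k.+1)%N by apply: ltnW.
rewrite -[i]/(val (Ordinal h')) co_ord; congr (u _ _); apply/val_inj.
by rewrite /= /bump leqNgt h.
Qed.

Lemma co_last k (u : 'rV['F_2]_k.+1) : co u k = u 0 ord_max.
Proof. by rewrite -[k]/(val (@ord_max k)) co_ord. Qed.

Lemma co_ext k (v : 'rV['F_2]_k) i : co (extrow v) i = co v i.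
Proof.
case: (ltnP i k.+1) => h; last by rewrite !co_ge // ltnW.
rewrite -[i]/(val (Ordinal h)) co_ord mxE.
case: unliftP => [j /(congr1 val) /= ->|/(congr1 val) /= ->].
  by rewrite /bump leqNgt ltn_ord add0n co_ord.
by rewrite co_ge.
Qed.

Lemma co_delta k (j : 'I_k) i : co (delta_mx 0 j) i = (i == j)%:R.
Proof.
case: (ltnP i k) => h.
  by rewrite -[i]/(val (Ordinal h)) co_ord mxE.
rewrite co_ge //; case: eqP => // e; move: h; rewrite e leqNgt ltn_ord.
by [].
Qed.

Lemma lowrow_ext k (v : 'rV['F_2]_k) : lowrow (extrow v) = v.
Proof. by apply: co_inj => i h; rewrite co_low // co_ext. Qed.

Lemma extrow_last k (v : 'rV['F_2]_k) : (extrow v) 0 ord_max = 0.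
Proof. by rewrite -co_last co_ext co_ge. Qed.

Lemma co0 k i : co (0 : 'rV['F_2]_k) i = 0.
Proof. by case: (ltnP i k) => h; [rewrite -[i]/(val (Ordinal h)) co_ord mxE | rewrite co_ge]. Qed.

Lemma lowrow0 k : lowrow (0 : 'rV['F_2]_k.+1) = 0.
Proof. by apply: co_inj => i h; rewrite co_low // !co0. Qed.

Section Iter.
Variables (k0 : nat) (S : qstr k0).

Lemma iter_sym : (forall a b, qv S a b = qv S b a) ->
  forall n a b, qv (iterExt S n) a b = qv (iterExt S n) b a.
Proof.
move=> h; elim=> [|n IH] a b //=.
rewrite IH mulrC; congr (rcons _ (rowseq _)); rewrite -!addrA; congr (_ + _); exact: addrC.
Qed.

Lemma iter_m1 n i : co (m1 (iterExt S n)) i = co (m1 S) i.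
Proof. by elim: n => [|n IH] //=; rewrite co_ext. Qed.

Lemma iter_size s0 : (forall a b, size (qv S a b) = s0) ->
  forall n a b, size (qv (iterExt S n) a b) = (n + s0)%N.
Proof. by move=> h; elim=> [|n IH] a b //=; rewrite size_rcons IH. Qed.

Lemma iter_diag : (forall a, qv S a a = qv S a (m1 S)) ->
  forall n a, qv (iterExt S n) a a = qv (iterExt S n) a (m1 (iterExt S n)).
Proof.
move=> h; elim=> [|n IH] a //=.
rewrite lowrow_ext extrow_last IH; congr (rcons _ (rowseq _)).
apply: co_inj => i _; rewrite !co_add !co_scale F2_mul_self.
by rewrite -addrA -mulrDr F2_add_self !mulr0 !mul0r !addr0 add0r.
Qed.

Lemma iter_coord n (a b : 'rV['F_2]_(n + k0)) (i j : nat) :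
  (forall a b, size (qv S a b) = k0) ->
  (i < j)%N -> (k0 <= j)%N -> (j < n + k0)%N ->
  nth 0 (nth [::] (qv (iterExt S n) a b) j) i =
  co a j * co b j * co (m1 S) i + co b j * co a i + co a j * co b i.
Proof.
move=> hs; elim: n a b => [|n IH] a b hij hj hjn; first by lia.
rewrite /= nth_rcons (iter_size hs).
case: (ltnP j (n + k0)) => hj'.
  by rewrite IH // !co_low //; lia.
have -> : j = (n + k0)%N by lia.
rewrite eqxx.
have hi : (i < n + k0)%N by lia.
rewrite -/(co _ i) !co_add !co_scale !co_low // iter_m1 !co_last.
done.
Qed.

End Iter.

Section CardLt.
Local Open Scope nat_scope.
Lemma card_lt m : #|[pred p : 'I_m * 'I_m | p.1 < p.2]| = 'C(m, 2).
Proof.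
rewrite -sum1_card big_mkcond /=.
rewrite (eq_bigr (fun p : 'I_m * 'I_m => nat_of_bool (p.1 < p.2))); last first.
  by move=> p _; rewrite inE; case: (_ < _).
rewrite -(pair_big xpredT xpredT (fun i j : 'I_m => nat_of_bool (i < j))) /=.
elim: m => [|m IH]; first by rewrite big_ord0.
rewrite big_ord_recr /=.
rewrite [X in _ + X]big1 ?addn0; last by move=> j _; rewrite ltnNge -ltnS ltn_ord.
rewrite (eq_bigr (fun i : 'I_m => \sum_(j < m) nat_of_bool (i < j) + nat_of_bool (i < m))); last first.
  by move=> i _; rewrite big_ord_recr.
rewrite big_split /= IH.
rewrite (eq_bigr (fun _ => 1)); last by move=> i _; rewrite ltn_ord.
by rewrite sum1_card card_ord binS bin1.
Qed.
End CardLt.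

Lemma spn_aux (i j i' j' : nat) (m : 'F_2) :
  (i' < j')%N -> ((i < j)%N \/ (i = 0 /\ j = 0)%N) ->
  (j' == i)%:R * (j' == j)%:R * m + (j' == j)%:R * (i' == i)%:R + (j' == i)%:R * (i' == j)%:R
  = ((i' == i) && (j' == j))%:R :> 'F_2.
Proof.
move=> h1 h2.
case: (j' =P i) => e1; case: (j' =P j) => e2; case: (i' =P i) => e3; case: (i' =P j) => e4;
  rewrite /= ?(mul0r, mulr0, mul1r, mulr1, add0r, addr0) //; lia.
Qed.

Lemma pair_eq_nat k (i j i' j' : 'I_k) :
  ((i, j) == (i', j')) = ((val i' == val i) && (val j' == val j)).
Proof. by rewrite xpair_eqE -!val_eqE /= (eq_sym (val i')) (eq_sym (val j')). Qed.

Definition crd k (p : 'I_k * 'I_k) (x : seq (seq 'F_2)) : 'F_2 := nth 0 (nth [::] x p.2) p.1.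

Lemma L0_size a b : size (qv L0 a b) = 0%N. Proof. by []. Qed.

Lemma L0_main n : dimB (L0Delta n) = 'C(n, 2).
Proof.
pose P0 := [pred p : 'I_(n + 0) * 'I_(n + 0) | (p.1 < p.2)%N].
have sym : forall a b, qv (L0Delta n) a b = qv (L0Delta n) b a by apply: iter_sym.
have m10 : m1 (L0Delta n) = 0.
  by apply: co_inj => i _; rewrite iter_m1 !co0.
have coord := iter_coord (S := L0) (n := n) _ _ L0_size.
have lin : forall p a b c, p \in P0 -> crd p (qv (L0Delta n) a (b + c)) =
    crd p (qv (L0Delta n) a b) + crd p (qv (L0Delta n) a c).
  move=> [i j] a b c; rewrite inE /= => hij; rewrite /crd /=.
  rewrite !coord // ?addn0 ?ltn_ord // !co_add; ring.
have spn : forall p q, p \in P0 -> q \in P0 ->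
    crd q (qv (L0Delta n) (delta_mx 0 p.1) (delta_mx 0 p.2)) = (p == q)%:R.
  move=> [i j] [i' j']; rewrite !inE /= => hij hij'; rewrite /crd /=.
  rewrite coord // ?addn0 ?ltn_ord // !co_delta pair_eq_nat spn_aux //; by left.
have base : forall i j, (exists x, qv (L0Delta n) (delta_mx 0 i) (delta_mx 0 j) = qv (L0Delta n) x 0) \/
    exists2 p, p \in P0 & qv (L0Delta n) (delta_mx 0 i) (delta_mx 0 j) =
                          qv (L0Delta n) (delta_mx 0 p.1) (delta_mx 0 p.2).
  move=> i j; case: (ltngtP i j) => h.
  - by right; exists (i, j).
  - by right; exists (j, i); rewrite // sym.
  - left; exists (delta_mx 0 i); have /val_inj <- := h.
    by rewrite iter_diag // m10.
have up := frame_upper sym base.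
have lo := frame_lower lin spn.
have hC : 'C(n + 0, 2) = 'C(n, 2) by rewrite addn0.
rewrite card_lt hC in up lo; rewrite /dimB; lia.
Qed.

Lemma L1_size a b : size (qv L1 a b) = 1%N. Proof. by []. Qed.

Lemma L1_m1 i : co (m1 L1) i = (i == 0%N)%:R.
Proof.
case: i => [|i]; last by rewrite co_ge.
by rewrite -[0%N]/(val (@ord0 0)) co_ord mxE.
Qed.

Lemma L1_first n (a b : 'rV['F_2]_(n + 1)) :
  nth [::] (qv (L1Delta n) a b) 0 = [:: co a 0 * co b 0].
Proof.
elim: n a b => [|n IH] a b.
  by rewrite /= -[0%N]/(val (@ord0 0)) !co_ord.
have h : (0 < n + 1)%N by rewrite addn1.
rewrite /L1Delta /= nth_rcons (iter_size L1_size) h.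
by have := IH (lowrow a) (lowrow b); rewrite /L1Delta => ->; rewrite !co_low.
Qed.

Lemma L1_main n : dimB (L1Delta n) = ('C(n + 1, 2) + 1)%N.
Proof.
have hz : (0 < n + 1)%N by rewrite addn1.
pose z := Ordinal hz.
pose P0 := [pred p : 'I_(n + 1) * 'I_(n + 1) | (p.1 < p.2)%N].
pose P1 := [pred p : 'I_(n + 1) * 'I_(n + 1) |
             (p.1 < p.2)%N || ((p.1 == 0%N :> nat) && (p.2 == 0%N :> nat))].
have sym : forall a b, qv (L1Delta n) a b = qv (L1Delta n) b a.
  by apply: iter_sym => a b; rewrite /= mulrC.
have m1z : m1 (L1Delta n) = delta_mx 0 z.
  by apply: co_inj => i _; rewrite iter_m1 L1_m1 co_delta.
have coord := iter_coord (S := L1) (n := n) _ _ L1_size.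
have lin : forall p a b c, p \in P1 -> crd p (qv (L1Delta n) a (b + c)) =
    crd p (qv (L1Delta n) a b) + crd p (qv (L1Delta n) a c).
  move=> [i j] a b c; rewrite inE /= => /orP [hij | /andP [/eqP hi /eqP hj]];
    rewrite /crd /=.
  - have h1 : (1 <= j)%N by lia.
    by rewrite !coord // ?ltn_ord // !co_add; ring.
  - by rewrite hi hj !L1_first /= !co_add; ring.
have spn : forall p q, p \in P1 -> q \in P1 ->
    crd q (qv (L1Delta n) (delta_mx 0 p.1) (delta_mx 0 p.2)) = (p == q)%:R.
  move=> [i j] [i' j']; rewrite !inE /= => hp /orP [hq | /andP [/eqP hi /eqP hj]];
    rewrite /crd /=.
  - have h1 : (1 <= j')%N by lia.
    rewrite coord ?ltn_ord //.
    rewrite !co_delta pair_eq_nat spn_aux //.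
    by case/orP: hp => [|/andP [/eqP -> /eqP ->]]; [left | right].
  - have -> : i' = z by apply/val_inj.
    have -> : j' = z by apply/val_inj.
    rewrite /= L1_first /= !co_delta pair_eq_nat /=.
    case/orP: hp => [h|/andP [/eqP -> /eqP ->]]; last by rewrite /= mulr1.
    by case: eqP => e1; case: eqP => e2; rewrite /= ?(mul0r, mulr0) //; lia.
have base : forall i j, (exists x, qv (L1Delta n) (delta_mx 0 i) (delta_mx 0 j) = qv (L1Delta n) x 0) \/
    exists2 p, p \in P1 & qv (L1Delta n) (delta_mx 0 i) (delta_mx 0 j) =
                          qv (L1Delta n) (delta_mx 0 p.1) (delta_mx 0 p.2).
  move=> i j; right; case: (ltngtP i j) => h.
  - by exists (i, j); rewrite // inE /= h.
  - by exists (j, i); rewrite ?inE /= ?h // sym.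
  - have /val_inj <- := h.
    rewrite iter_diag //; last by move=> a; rewrite /= mxE F2_mul_self mulr1.
    rewrite -/(L1Delta n) m1z.
    case: (posnP i) => hi.
      exists (z, z); first by rewrite inE /= eqxx.
      by congr (qv _ (delta_mx 0 _) _); apply/val_inj.
    by exists (z, i); rewrite ?inE /= ?hi // sym.
have up := frame_upper sym base.
have lo := frame_lower lin spn.
have cP : #|P1| = ('C(n + 1, 2) + 1)%N.
  rewrite (@eq_card _ P1 [predU1 (z, z) & P0]); last first.
    move=> [x y]; rewrite !inE /= pair_eq_nat /= orbC.
    by rewrite (eq_sym 0%N) (eq_sym 0%N).
  by rewrite cardU1 card_lt addnC.
rewrite cP in up lo; rewrite /dimB; lia.
Qed.

Theorem corollary4 (n : nat) :
  dimB (L0Delta n) = 'C(n, 2) /\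
  (0 < n -> dimB (L1Delta n.-1) = 'C(n, 2) + 1)%N.
Proof.
split; first exact: L0_main.
case: n => [//|n] _.
have h := L1_main n.
have e : 'C(n + 1, 2) = 'C(n.+1, 2) by rewrite addn1.
by rewrite e in h; exact: h.
Qed.
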